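(* For all $x,y\in\mathbb{C}$ and all integers $n\ge 0$, \[ \sum_{k=0}^n(-1)^k x^{n-k}\big(L_{k+1}(y)+(xy-2)F_k(y)\big)=(-1)^n y\,F_{n+1}(y) \] and \[ \sum_{k=0}^n(-1)^k x^{n-k}\big((y^2+4)F_{k+1}(y)+(xy-2)L_k(y)\big)=(-1)^n y\,L_{n+1}(y)+2y\,x^{n+1}. \]
   Context: The Fibonacci polynomials $F_n(y)$ and Lucas polynomials $L_n(y)$ are defined by $F_0(y)=0$, $F_1(y)=1$, $L_0(y)=2$, $L_1(y)=y$ and $W_n(y)=yW_{n-1}(y)+W_{n-2}(y)$ for $n\ge2$ (for $W=F$ and $W=L$). *)

(* Defs.v *)
From HB Require Import structures.
From mathcomp Require Import all_boot all_order all_algebra.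
From mathcomp Require Import complex.
From mathcomp Require Import Rstruct.
From Stdlib Require Import Reals.
Set Implicit Arguments. Unset Strict Implicit. Unset Printing Implicit Defensive.
Import GRing.Theory.
Local Open Scope ring_scope.

Notation CC := (complex.complex Rdefinitions.R).

Fixpoint fib_pair {K : comNzRingType} (n : nat) : {poly K} * {poly K} :=
  match n with
  | 0 => (0, 1)
  | n'.+1 => let p := fib_pair n' in (p.2, 'X * p.2 + p.1)
  end.
Definition fibP {K : comNzRingType} (n : nat) : {poly K} := (fib_pair n).1.

Fixpoint luc_pair {K : comNzRingType} (n : nat) : {poly K} * {poly K} :=
  match n with
  | 0 => (2%:R%:P, 'X)
  | n'.+1 => let p := luc_pair n' in (p.2, 'X * p.2 + p.1)
  end.
Definition lucP {K : comNzRingType} (n : nat) : {poly K} := (luc_pair n).1.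

(* Main.v *)
Require Import Defs.
From mathcomp Require Import all_boot all_order all_algebra.
From mathcomp Require Import complex Rstruct.
From mathcomp Require Import ring.
Import GRing.Theory.
Local Open Scope ring_scope.

Lemma fibS2 (k : nat) : fibP k.+2 = 'X * fibP k.+1 + fibP k :> {poly CC}.
Proof. by []. Qed.
Lemma lucS2 (k : nat) : lucP k.+2 = 'X * lucP k.+1 + lucP k :> {poly CC}.
Proof. by []. Qed.

Lemma fl_rel (y : CC) (m : nat) :
  (lucP m.+1).[y] = y * (fibP m.+1).[y] + 2%:R * (fibP m).[y] /\
  (lucP m).[y] = 2%:R * (fibP m.+1).[y] - y * (fibP m).[y].
Proof.
elim: m => [|m [IH1 IH2]].
  have f0 : (fibP 0).[y] = 0 :> CC by rewrite /fibP /= hornerE.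
  have f1 : (fibP 1).[y] = 1 :> CC by rewrite /fibP /= hornerE.
  have l0 : (lucP 0).[y] = 2%:R :> CC by rewrite /lucP /= hornerE.
  have l1 : (lucP 1).[y] = y :> CC by rewrite /lucP /= hornerE.
  rewrite f0 f1 l0 l1; split; ring.
split.
  rewrite lucS2 fibS2 !hornerE IH1 IH2. ring.
by rewrite IH1 fibS2 !hornerE; ring.
Qed.

Lemma pullx (x : CC) (n : nat) (F : nat -> CC) :
  \sum_(0 <= k < n.+1) F k * x ^+ (n.+1 - k) =
  x * \sum_(0 <= k < n.+1) F k * x ^+ (n - k).
Proof.
rewrite big_distrr /=; apply: eq_big_nat => k /andP [_ Hk].
by rewrite subSn // exprS; ring.
Qed.

Theorem proposition3 (x y : CC) (n : nat) :
  \sum_(0 <= k < n.+1)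
      (-1) ^+ k * x ^+ (n - k) *
      ((lucP k.+1).[y] + (x * y - 2%:R) * (fibP k).[y])
    = (-1) ^+ n * y * (fibP n.+1).[y]
  /\
  \sum_(0 <= k < n.+1)
      (-1) ^+ k * x ^+ (n - k) *
      ((y ^+ 2 + 4%:R) * (fibP k.+1).[y] + (x * y - 2%:R) * (lucP k).[y])
    = (-1) ^+ n * y * (lucP n.+1).[y] + 2%:R * y * x ^+ n.+1.
Proof.
elim: n => [|n [IH1 IH2]].
  have f0 : (fibP 0).[y] = 0 :> CC by rewrite /fibP /= hornerE.
  have f1 : (fibP 1).[y] = 1 :> CC by rewrite /fibP /= hornerE.
  have l0 : (lucP 0).[y] = 2%:R :> CC by rewrite /lucP /= hornerE.
  have l1 : (lucP 1).[y] = y :> CC by rewrite /lucP /= hornerE.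
  rewrite !big_nat1 f0 f1 l0 l1; split; ring.
have [A1 _] := fl_rel y n.+1.
have [_ B2] := fl_rel y n.+1.
split.
  rewrite big_nat_recr //= subnn.
  have -> : \sum_(0 <= i < n.+1) (-1) ^+ i * x ^+ (n.+1 - i) *
      ((lucP i.+1).[y] + (x * y - 2%:R) * (fibP i).[y]) =
    x * \sum_(0 <= i < n.+1) (-1) ^+ i * x ^+ (n - i) *
      ((lucP i.+1).[y] + (x * y - 2%:R) * (fibP i).[y]).
    rewrite big_distrr /=; apply: eq_big_nat => k /andP [_ Hk]; rewrite subSn // exprS; ring.
  rewrite IH1 A1 !exprS; ring.
rewrite big_nat_recr //= subnn.
have -> : \sum_(0 <= i < n.+1) (-1) ^+ i * x ^+ (n.+1 - i) *
    ((y ^+ 2 + 4%:R) * (fibP i.+1).[y] + (x * y - 2%:R) * (lucP i).[y]) =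
  x * \sum_(0 <= i < n.+1) (-1) ^+ i * x ^+ (n - i) *
    ((y ^+ 2 + 4%:R) * (fibP i.+1).[y] + (x * y - 2%:R) * (lucP i).[y]).
  rewrite big_distrr /=; apply: eq_big_nat => k /andP [_ Hk]; rewrite subSn // exprS; ring.
rewrite IH2 A1 B2 !exprS; move: ((fibP n.+2).[y]) ((fibP n.+1).[y]) ((-1) ^+ n : CC) (x ^+ n) => a b s t; ring.
Qed.
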